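(* Let $R\in(0,\pi)$ and let $\Omega_R\subset\mathbb{S}^2$ be the closed spherical cap of geodesic radius $R$ centered at the north pole. Let $$\mathfrak{C}_{\Omega_R}=\{u\colon\overline{\Omega_R}\to [0,\infty) \;:\; u|_{\partial\Omega_R}=0,\ u \text{ piecewise } C^1\}.$$ Then $\inf\{R_1[u]\colon u\in\mathfrak{C}_{\Omega_R}\}=0$. Consequently, $R_1$ has no minimizer in $\mathfrak{C}_{\Omega_R}$.
   Context: On $\mathbb{S}^2$ use spherical coordinates $\Psi(\theta,\phi)=(\sin\theta\cos\phi,\sin\theta\sin\phi,\cos\theta)$, $\theta\in[0,\pi]$, $\phi\in[0,2\pi)$, with round metric $d\theta^2+\sin^2\theta\,d\phi^2$, area element $d\Omega=\sin\theta\,d\theta\,d\phi$, and $|\nabla_{\mathbb{S}^2}u|^2=u_\theta^2+u_\phi^2/\sin^2\theta$. A function $u$ on a domain $\Omega\subset\mathbb{S}^2$ describes the radial graph $\{e^{u(\xi)}\xi:\xi\in\Omega\}$. The (scale-invariant free expansion) resistance functional is $$R_1[u]=\int_{\Omega}\frac{1}{1+|\nabla_{\mathbb{S}^2}u|^2}\,d\Omega.$$ *)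

(* Defs.v *)
From Stdlib Require Import Reals.
From Coquelicot Require Import Coquelicot.
Open Scope R_scope.

Definition pt3 : Type := (R * R * R)%type.

Definition Psi (theta phi : R) : pt3 :=
  (sin theta * cos phi, sin theta * sin phi, cos theta).

Definition C1_2d (V : R -> R -> R) : Prop :=
  forall x y,
    ex_derive (fun s => V s y) x /\ ex_derive (fun t => V x t) y /\
    continuity_2d_pt (fun s t => Derive (fun s' => V s' t) s) x y /\
    continuity_2d_pt (fun s t => Derive (fun t' => V s t') t) x y.

(* Piecewise C^1 on the closed rectangle [a,b]x[c,d]: there are grid
   partitions a = s_0 < ... < s_m = b and c = t_0 < ... < t_k = d such that
   on each closed cell U coincides with a C^1 function.  (This implies that
   U is continuous on the rectangle.) *)
Definition pw_C1_rect (U : R -> R -> R) (a b c d : R) : Prop :=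
  exists (m k : nat) (s t : nat -> R),
    s 0%nat = a /\ s m = b /\ (forall i, (i < m)%nat -> s i < s (S i)) /\
    t 0%nat = c /\ t k = d /\ (forall j, (j < k)%nat -> t j < t (S j)) /\
    forall i j, (i < m)%nat -> (j < k)%nat ->
      exists V : R -> R -> R, C1_2d V /\
        forall x y, s i <= x <= s (S i) -> t j <= y <= t (S j) -> U x y = V x y.

(* u : S^2 -> R (given as a function on R^3; only its values on the closed
   cap Omega_Rad = { Psi theta phi | 0 <= theta <= Rad } matter).
   The admissible class C_{Omega_Rad}. *)
Definition admissible (Rad : R) (u : pt3 -> R) : Prop :=
  (forall theta phi, 0 <= theta <= Rad -> 0 <= u (Psi theta phi)) /\
  (forall phi, u (Psi Rad phi) = 0) /\
  pw_C1_rect (fun theta phi => u (Psi theta phi)) 0 Rad 0 (2 * PI).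

(* The resistance functional R_1[u] over the cap, written in spherical
   coordinates: d Omega = sin theta dtheta dphi and
   |grad u|^2 = u_theta^2 + u_phi^2 / sin^2 theta. *)
Definition Resist1 (Rad : R) (u : pt3 -> R) : R :=
  let U := fun theta phi => u (Psi theta phi) in
  RInt (fun phi =>
    RInt (fun theta =>
      sin theta /
        (1 + (Derive (fun t => U t phi) theta) ^ 2
           + (Derive (fun p => U theta p) phi) ^ 2 / (sin theta) ^ 2))
      0 Rad)
    0 (2 * PI).

(* Main.v *)
Require Import Defs.
From Stdlib Require Import Reals Lra Psatz.
From Coquelicot Require Import Coquelicot.
Open Scope R_scope.
Lemma ballR x e y : ball x e y <-> Rabs (y - x) < e.
Proof. reflexivity. Qed.
Lemma cont2d_1 f x y : continuity_2d_pt f x y -> continuous (fun u => f u y) x.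
Proof.
  intros H. apply filterlim_locally. intros eps.
  destruct (H eps) as [d Hd]. exists d. intros u Hu. apply ballR.
  apply Hd. apply ballR in Hu. exact Hu. rewrite Rminus_eq_0, Rabs_R0. apply cond_pos.
Qed.
Lemma loc_int (f g : R -> R) a b x : a < x < b -> (forall t, a <= t <= b -> f t = g t) ->
  locally x (fun t => f t = g t).
Proof.
  intros Hx H. assert (Hp : 0 < Rmin (x - a) (b - x)) by (apply Rmin_glb_lt; lra).
  exists (mkposreal _ Hp). intros t Ht. assert (Ht' : Rabs (t - x) < Rmin (x-a) (b-x)) by exact Ht. clear Ht.
  simpl; apply H. pose proof (Rmin_l (x-a) (b-x)). pose proof (Rmin_r (x-a) (b-x)).
  apply Rabs_def2 in Ht'. lra.
Qed.

Lemma inv_nonneg x : 0 <= x -> 0 <= / x.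
Proof.
  intros H. destruct (Req_dec x 0) as [->|Hn]. rewrite Rinv_0; lra.
  left. apply Rinv_0_lt_compat. lra.
Qed.

Definition Hf (A B : R -> R -> R) (u v : R) : R :=
  sin u / (1 + (A u v) ^ 2 + (B u v) ^ 2 / (sin u) ^ 2).

Lemma den_ge1 a b s : 1 <= 1 + a ^ 2 + b ^ 2 / s ^ 2.
Proof.
  unfold Rdiv. assert (0 <= b^2 * / s^2).
  { apply Rmult_le_pos. nra. apply inv_nonneg. nra. }
  nra.
Qed.

Lemma Hf_abs A B u v : Rabs (Hf A B u v) <= Rabs (sin u).
Proof.
  unfold Hf. set (D := 1 + _ + _). assert (HD : 1 <= D) by apply den_ge1.
  unfold Rdiv. rewrite Rabs_mult.
  rewrite (Rabs_pos_eq (/ D)) by (left; apply Rinv_0_lt_compat; lra).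
  assert (/ D <= 1).
  { rewrite <- Rinv_1. apply Rinv_le_contravar; lra. }
  assert (0 < / D) by (apply Rinv_0_lt_compat; lra).
  pose proof (Rabs_pos (sin u)). nra.
Qed.

Lemma Hf_nonneg A B u v : 0 <= sin u -> 0 <= Hf A B u v.
Proof.
  intros H. unfold Hf. set (D := 1 + _ + _). assert (HD : 1 <= D) by apply den_ge1.
  unfold Rdiv. apply Rmult_le_pos. lra. left; apply Rinv_0_lt_compat; lra.
Qed.

Lemma Hf_pos A B u v : 0 < sin u -> 0 < Hf A B u v.
Proof.
  intros H. unfold Hf. set (D := 1 + _ + _). assert (HD : 1 <= D) by apply den_ge1.
  unfold Rdiv. apply Rmult_lt_0_compat. lra. apply Rinv_0_lt_compat; lra.
Qed.

Lemma sin2d x y : continuity_2d_pt (fun u _ => sin u) x y.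
Proof.
  apply (continuity_1d_2d_pt_comp sin (fun u _ => u)).
  apply continuity_sin. apply continuity_2d_pt_id1.
Qed.

Lemma Hf_cont A B x y :
  continuity_2d_pt A x y -> continuity_2d_pt B x y ->
  continuity_2d_pt (Hf A B) x y.
Proof.
  intros HA HB.
  destruct (Req_dec (sin x) 0) as [Hs|Hs].
  - intros eps. destruct (sin2d x y eps) as [d Hd].
    exists d. intros u v Hu Hv. specialize (Hd u v Hu Hv). simpl in Hd.
    rewrite Hs in Hd. rewrite Rminus_0_r in Hd.
    assert (Hf A B x y = 0) as ->.
    { unfold Hf. rewrite Hs. unfold Rdiv. ring. }
    rewrite Rminus_0_r. eapply Rle_lt_trans. apply Hf_abs. exact Hd.
  - apply continuity_2d_pt_ext with
      (f := fun u v => sin u * / (1 + A u v * A u v + B u v * B u v * / (sin u * sin u))).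
    { intros; unfold Hf, Rdiv; simpl; rewrite !Rmult_1_r; reflexivity. }
    apply continuity_2d_pt_mult. apply sin2d.
    apply continuity_2d_pt_inv.
    2: { pose proof (den_ge1 (A x y) (B x y) (sin x)). simpl in H.
         rewrite !Rmult_1_r in H. unfold Rdiv in H. lra. }
    apply continuity_2d_pt_plus. apply continuity_2d_pt_plus.
    apply continuity_2d_pt_const. apply continuity_2d_pt_mult; auto.
    apply continuity_2d_pt_mult. apply continuity_2d_pt_mult; auto.
    apply continuity_2d_pt_inv. apply continuity_2d_pt_mult; apply sin2d.
    intro H; apply Hs. nra.
Qed.

Definition DU1 (U : R -> R -> R) (x y : R) := Derive (fun t => U t y) x.
Definition DU2 (U : R -> R -> R) (x y : R) := Derive (fun p => U x p) y.

Lemma cell (U V : R -> R -> R) a b c d :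
  a < b -> c < d -> 0 <= a -> b < PI -> C1_2d V ->
  (forall x y, a <= x <= b -> c <= y <= d -> U x y = V x y) ->
  exists G : R -> R,
    (forall p, c <= p <= d -> continuous G p) /\
    (forall p, c < p < d -> is_RInt (fun th => Hf (DU1 U) (DU2 U) th p) a b (G p)) /\
    (forall p, c < p < d -> 0 < G p).
Proof.
  intros hab hcd ha hb HV Heq.
  set (h := Hf (DU1 V) (DU2 V)).
  assert (hc : forall x y, continuity_2d_pt h x y).
  { intros x y. apply Hf_cont; apply HV. }
  assert (hex : forall p, ex_RInt (fun th => h th p) a b).
  { intros p. apply (@ex_RInt_continuous R_CompleteNormedModule). intros z _. apply cont2d_1, hc. }
  exists (fun p => RInt (fun th => h th p) a b). split; [|split].
  - intros p0 _. apply filterlim_locally. intros eps.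
    assert (He : 0 < eps / (2 * (b - a))).
    { apply Rdiv_lt_0_compat. apply cond_pos. lra. }
    destruct (uniform_continuity_2d_1d h a b p0 (fun x _ => hc x p0) (mkposreal _ He)) as [dl Hdl].
    exists dl. intros p Hp.
    assert (Hp' : Rabs (p - p0) < dl) by exact Hp. clear Hp.
    change (Rabs (RInt (fun th => h th p) a b - RInt (fun th => h th p0) a b) < eps).
    assert (E : RInt (fun th => h th p) a b - RInt (fun th => h th p0) a b
               = RInt (fun th => h th p - h th p0) a b).
    { symmetry. apply (RInt_minus (fun th => h th p) (fun th => h th p0)); apply hex. }
    rewrite E.
    eapply Rle_lt_trans.
    apply abs_RInt_le_const with (M := eps / (2 * (b - a))). lra.
    apply (ex_RInt_minus (fun th => h th p) (fun th => h th p0)); apply hex.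
    { intros t Ht. left. apply Rabs_def2 in Hp'. simpl in Hdl.
      apply (Hdl t p0 t p); try lra.
      rewrite Rminus_eq_0, Rabs_R0. apply cond_pos. }
    pose proof (cond_pos eps). field_simplify; lra.
  - intros p Hp. apply is_RInt_ext with (f := fun th => h th p).
    + intros x Hx. rewrite Rmin_left in Hx by lra. rewrite Rmax_right in Hx by lra.
      unfold h, Hf, DU1, DU2.
      rewrite (Derive_ext_loc (fun t => V t p) (fun t => U t p)).
      rewrite (Derive_ext_loc (fun t => V x t) (fun t => U x t)). reflexivity.
      apply (loc_int (fun t => V x t) (fun t => U x t) c d). lra. intros t Ht; symmetry; apply Heq; lra.
      apply (loc_int (fun t => V t p) (fun t => U t p) a b). lra. intros t Ht; symmetry; apply Heq; lra.
    + apply (@RInt_correct R_CompleteNormedModule), hex.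
  - intros p Hp. apply RInt_gt_0. lra.
    intros x Hx. apply Hf_pos. apply sin_gt_0; lra.
    intros x _. apply cont2d_1, hc.
Qed.

Lemma mono (s : nat -> R) m : (forall i, (i < m)%nat -> s i < s (S i)) ->
  forall i j, (i <= j)%nat -> (j <= m)%nat -> s i <= s j.
Proof.
  intros H i j Hij. induction Hij; intros Hm. lra.
  assert (s i <= s m0) by (apply IHHij; lia). specialize (H m0 ltac:(lia)). lra.
Qed.

Lemma row (U : R -> R -> R) (m : nat) (s : nat -> R) c d :
  c < d -> s 0%nat = 0 -> (forall i, (i < m)%nat -> s i < s (S i)) -> s m < PI ->
  (forall i, (i < m)%nat -> exists V, C1_2d V /\
      forall x y, s i <= x <= s (S i) -> c <= y <= d -> U x y = V x y) ->
  forall n, (n <= m)%nat -> exists G : R -> R,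
    (forall p, c <= p <= d -> continuous G p) /\
    (forall p, c < p < d -> is_RInt (fun th => Hf (DU1 U) (DU2 U) th p) (s 0%nat) (s n) (G p)) /\
    (forall p, c < p < d -> 0 <= G p) /\
    ((0 < n)%nat -> forall p, c < p < d -> 0 < G p).
Proof.
  intros hcd hs0 hs hsm Hc n. induction n as [|n IH]; intros Hn.
  - exists (fun _ => 0). split; [|split; [|split]].
    + intros p _. apply continuous_const.
    + intros p _. apply (is_RInt_point (V := R_NormedModule)).
    + intros; lra.
    + intros H; lia.
  - destruct IH as [G [G1 [G2 [G3 _]]]]. lia.
    destruct (Hc n ltac:(lia)) as [V [HV HUV]].
    assert (h0 : 0 <= s n) by (rewrite <- hs0; apply (mono s m hs); lia).
    assert (h1 : s (S n) <= s m) by (apply (mono s m hs); lia).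
    destruct (cell U V (s n) (s (S n)) c d (hs n ltac:(lia)) hcd h0 ltac:(lra) HV HUV)
      as [Gc [C1 [C2 C3]]].
    exists (fun p => G p + Gc p). split; [|split; [|split]].
    + intros p Hp. apply (continuous_plus G Gc). apply G1, Hp. apply C1, Hp.
    + intros p Hp. apply (is_RInt_Chasles (V := R_NormedModule) _ _ (s n) _ (G p) (Gc p)).
      apply G2, Hp. apply C2, Hp.
    + intros p Hp. specialize (G3 p Hp). specialize (C3 p Hp). lra.
    + intros _ p Hp. specialize (G3 p Hp). specialize (C3 p Hp). lra.
Qed.

Lemma resist_pos Rad u : 0 < Rad < PI -> admissible Rad u -> 0 < Resist1 Rad u.
Proof.
  intros hR [Hnn [Hb [m [k [s [t [s0 [sm [hs [t0 [tk [ht Hc]]]]]]]]]]]].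
  set (U := fun th ph => u (Psi th ph)) in *.
  set (F := fun ph => RInt (fun th => Hf (DU1 U) (DU2 U) th ph) 0 Rad).
  change (0 < RInt F 0 (2 * PI)).
  assert (hm : (0 < m)%nat).
  { destruct m. rewrite s0 in sm. lra. lia. }
  assert (col : forall n, (n <= k)%nat -> exists L, is_RInt F (t 0%nat) (t n) L /\ 0 <= L /\
                  ((0 < n)%nat -> 0 < L)).
  { induction n as [|n IH]; intros Hn.
    - exists 0. split. apply (is_RInt_point (V := R_NormedModule)). split. lra. intros; lia.
    - destruct IH as [L [L1 [L2 _]]]. lia.
      assert (htn := ht n ltac:(lia)).
      destruct (row U m s (t n) (t (S n)) htn s0 hs ltac:(lra)
                  (fun i hi => Hc i n hi ltac:(lia)) m (le_n m)) as [G [G1 [G2 [_ G4]]]].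
      assert (EG : forall p, t n < p < t (S n) -> F p = G p).
      { intros p Hp. unfold F. rewrite <- s0, <- sm. apply is_RInt_unique. apply G2, Hp. }
      assert (exG : ex_RInt G (t n) (t (S n))).
      { apply (@ex_RInt_continuous R_CompleteNormedModule). intros z Hz.
        rewrite Rmin_left in Hz by lra. rewrite Rmax_right in Hz by lra. apply G1, Hz. }
      exists (L + RInt G (t n) (t (S n))).
      assert (Gp : 0 < RInt G (t n) (t (S n))).
      { apply RInt_gt_0. lra. intros; apply G4; auto. intros; apply G1; auto. }
      split; [|split; [lra|intros; lra]].
      apply (is_RInt_Chasles (V := R_NormedModule) _ _ (t n) _ L (RInt G (t n) (t (S n)))).
      exact L1.
      apply is_RInt_ext with (f := G).
      { intros x Hx. rewrite Rmin_left in Hx by lra. rewrite Rmax_right in Hx by lra.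
        symmetry; apply EG; lra. }
      apply (@RInt_correct R_CompleteNormedModule), exG. }
  destruct (col k (le_n k)) as [L [L1 [L2 L3]]].
  rewrite t0, tk in L1. rewrite (is_RInt_unique _ _ _ _ L1). apply L3.
  destruct k. rewrite t0 in tk. pose proof PI_RGT_0. lra. lia.
Qed.

Definition uk (Rad k : R) (p : pt3) : R := k * (Rad - acos (snd p)).

Lemma uk_Psi Rad k th ph : uk Rad k (Psi th ph) = k * (Rad - acos (cos th)).
Proof. reflexivity. Qed.

Lemma DV1 k Rad x : Derive (fun s' => k * (Rad - s')) x = - k.
Proof. apply is_derive_unique. auto_derive; auto. ring. Qed.

Lemma example Rad k : 0 < Rad < PI -> 0 <= k ->
  admissible Rad (uk Rad k) /\
  Resist1 Rad (uk Rad k) = 2 * PI * (1 - cos Rad) / (1 + k ^ 2).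
Proof.
  intros hR hk. pose proof PI_RGT_0 as HPI. split.
  - split; [|split].
    + intros th ph Hth. rewrite uk_Psi, acos_cos by lra. nra.
    + intros ph. rewrite uk_Psi, acos_cos by lra. ring.
    + exists 1%nat, 1%nat, (fun i => match i with 0%nat => 0 | _ => Rad end),
        (fun i => match i with 0%nat => 0 | _ => 2 * PI end).
      split; [reflexivity|]. split; [reflexivity|]. split.
      { intros i Hi. destruct i; [lra|lia]. }
      split; [reflexivity|]. split; [reflexivity|]. split.
      { intros i Hi. destruct i; [lra|lia]. }
      intros i j Hi Hj. destruct i; [|lia]. destruct j; [|lia].
      exists (fun x _ => k * (Rad - x)). split.
      * intros x y. split; [|split; [|split]].
        -- auto_derive; auto.
        -- auto_derive; auto.
        -- apply continuity_2d_pt_ext with (f := fun _ _ => - k).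
           intros; symmetry; apply DV1. apply continuity_2d_pt_const.
        -- apply continuity_2d_pt_ext with (f := fun _ _ => 0).
           intros; symmetry; apply Derive_const. apply continuity_2d_pt_const.
      * intros x y Hx Hy. simpl in Hx. cbv beta. rewrite uk_Psi, acos_cos by lra. reflexivity.
  - unfold Resist1. cbv zeta.
    set (c := (1 - cos Rad) / (1 + k ^ 2)).
    assert (Hk : 0 < 1 + k ^ 2) by nra.
    rewrite (RInt_ext _ (fun _ => c)).
    + rewrite RInt_const. unfold c. change (scal (2 * PI - 0) ((1 - cos Rad) / (1 + k ^ 2)))
        with ((2 * PI - 0) * ((1 - cos Rad) / (1 + k ^ 2))). field. lra.
    + intros ph _.
      rewrite (RInt_ext _ (fun th => sin th / (1 + k ^ 2))).
      * apply is_RInt_unique.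
        replace c with (minus ((fun th => - cos th / (1 + k ^ 2)) Rad)
                              ((fun th => - cos th / (1 + k ^ 2)) 0)).
        apply (is_RInt_derive (V := R_CompleteNormedModule) (fun th => - cos th / (1 + k ^ 2)) (fun th => sin th / (1 + k ^ 2)) 0 Rad).
        { intros x _. auto_derive. lra. field. lra. }
        { intros x _. apply continuity_pt_filterlim.
          apply continuity_pt_div. apply continuity_sin. apply continuity_pt_const.
          intros a b; reflexivity. lra. }
        unfold minus, plus, opp; simpl. rewrite cos_0. unfold c. field. lra.
      * intros th Hth. rewrite Rmin_left in Hth by lra. rewrite Rmax_right in Hth by lra.
        rewrite (Derive_ext_loc _ (fun t => k * (Rad - t))).
        rewrite DV1. rewrite (Derive_ext (fun p => uk Rad k (Psi th p)) (fun _ => k * (Rad - acos (cos th)))) by (intros; apply uk_Psi). rewrite Derive_const. unfold Rdiv. replace (1 + (-k)^2 + 0^2 * / sin th^2) with (1 + k^2) by ring. reflexivity.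
        apply (loc_int _ (fun t => k * (Rad - t)) 0 Rad). lra.
        intros t Ht. rewrite uk_Psi, acos_cos by lra. reflexivity.
Qed.

Lemma small Rad r : 0 < Rad < PI -> 0 < r -> exists v, admissible Rad v /\ Resist1 Rad v < r.
Proof.
  intros hR hr. pose proof PI_RGT_0. pose proof (COS_bound Rad).
  set (C := 2 * PI * (1 - cos Rad)).
  assert (HC : 0 <= C) by (unfold C; nra).
  set (k := C / r).
  assert (hk : 0 <= k) by (unfold k; apply Rdiv_le_0_compat; lra).
  assert (Hkr : k * r = C) by (unfold k; field; lra).
  destruct (example Rad k hR hk) as [Ha He]. exists (uk Rad k). split. exact Ha.
  rewrite He. fold C. apply Rlt_div_l. nra. nra.
Qed.

Theorem proposition2p5 (Rad : R) (hRad : 0 < Rad < PI) :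
  is_glb_Rbar (fun x => exists u, admissible Rad u /\ x = Resist1 Rad u) 0 /\
  ~ (exists u, admissible Rad u /\
       forall v, admissible Rad v -> Resist1 Rad u <= Resist1 Rad v).
Proof.
  split.
  - split.
    + intros x [u [Hu ->]]. simpl. left. apply resist_pos; auto.
    + intros b Hb. destruct b as [r| |]; simpl; auto.
      * destruct (Rle_lt_dec r 0) as [H|H]; auto.
        destruct (small Rad r hRad H) as [v [Hv Hlt]].
        specialize (Hb (Resist1 Rad v) (ex_intro _ v (conj Hv eq_refl))). simpl in Hb. lra.
      * destruct (small Rad 1 hRad Rlt_0_1) as [v [Hv _]].
        exact (Hb (Resist1 Rad v) (ex_intro _ v (conj Hv eq_refl))).
  - intros [u [Hu Hmin]].
    destruct (small Rad (Resist1 Rad u) hRad (resist_pos Rad u hRad Hu)) as [v [Hv Hlt]].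
    specialize (Hmin v Hv). lra.
Qed.
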